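(* Let $k$ be a field of characteristic $p>0$, let $1\le c<p$, and let $a\ge b\ge1$ be integers, $d=a+b+c$. Then the Young module $Y^{(a,b,1^c)}$ is a direct summand of the signed permutation module $M^{(a,b|c)}$.
   Context: For a sequence $\gamma=(\gamma_1,\dots,\gamma_t)$ of nonnegative integers summing to $r$, $\Sigma_\gamma=\Sigma_{\gamma_1}\times\dots\times\Sigma_{\gamma_t}\le\Sigma_r$ (the first factor permuting the first $\gamma_1$ letters, etc.). For $\lambda=(\lambda_1,\dots,\lambda_m)$, $\mu=(\mu_1,\dots,\mu_n)$ with $|\lambda|+|\mu|=d$, the signed permutation module is $M^{(\lambda|\mu)}=\operatorname{ind}_{\Sigma_\lambda\times\Sigma_\mu}^{\Sigma_d}(k\boxtimes\operatorname{sgn})$, with $k$ trivial for $\Sigma_\lambda$ and $\operatorname{sgn}$ the sign representation of $\Sigma_\mu$; thus $M^{(a,b|c)}=\operatorname{ind}_{\Sigma_a\times\Sigma_b\times\Sigma_c}^{\Sigma_d}(k\boxtimes k\boxtimes\operatorname{sgn})$. For a partition $\lambda$ of $d$, the Young module $Y^\lambda$ is the unique indecomposable direct summand of the permutation module $M^\lambda=\operatorname{ind}_{\Sigma_\lambda}^{\Sigma_d}k$ containing the Specht module $S^\lambda$. *)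

(* Defs.v *)
From HB Require Import structures.
From mathcomp Require Import all_boot all_order all_algebra all_fingroup.
From mathcomp Require Import mxrepresentation.
Set Implicit Arguments. Unset Strict Implicit. Unset Printing Implicit Defensive.
Import GRing.Theory.
Local Open Scope ring_scope.

(* For a sequence gamma of nats summing to d, [rowof gamma i] is the index of the
   block (row) of gamma containing the letter i, letters being 0,...,d-1 and the
   blocks being consecutive: block j = [g_0+..+g_(j-1), g_0+..+g_j). *)
Definition rowof (gamma : seq nat) (i : nat) : nat :=
  count (fun j => \sum_(l < j.+1) nth 0 gamma l <= i)%N (iota 0 (size gamma)).

(* Column of the letter i in the tableau of shape gamma filled row by row
   with 0,...,d-1. *)
Definition colof (gamma : seq nat) (i : nat) : nat :=
  (i - \sum_(l < rowof gamma i) nth 0 gamma l)%N.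

Definition stab_lab d (f : nat -> nat) : {set {perm 'I_d}} :=
  [set s : {perm 'I_d} | [forall i : 'I_d, f (s i) == f i]].

Definition young_sub d (gamma : seq nat) := stab_lab d (rowof gamma).
Definition col_stab d (gamma : seq nat) := stab_lab d (colof gamma).

Section GroupAlgebra.
Variables (F : fieldType) (d : nat).

Definition SymG := [set: {perm 'I_d}]%G.
Definition nG := gcard SymG.
Definition aG := regular_repr F SymG.

Definition gelt (x : {perm 'I_d}) : 'rV[F]_nG := gring_row (aG x).

Definition gmul (u v : 'rV[F]_nG) : 'rV[F]_nG := u *m gring_mx aG v.

Definition symz (A : {set {perm 'I_d}}) : 'rV[F]_nG :=
  \sum_(x in A) gelt x.
Definition asymz (A : {set {perm 'I_d}}) : 'rV[F]_nG :=
  \sum_(x in A) ((-1) ^+ odd_perm x) *: gelt x.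

(* Permutation module M^gamma = ind_{Sigma_gamma}^{Sigma_d} k, realised as the
   cyclic submodule of kG generated by the Young-subgroup sum. *)
Definition perm_module (gamma : seq nat) : 'M[F]_nG :=
  cyclic_mx aG (symz (young_sub d gamma)).

(* Signed permutation module M^(lam|mu) = ind_{Sigma_lam x Sigma_mu}^{Sigma_d}
   (k boxtimes sgn), realised as the cyclic submodule of kG generated by
   sum_{(x,y) in Sigma_lam x Sigma_mu} sgn(y) x y, where Sigma_lam acts on the
   first |lam| letters and Sigma_mu on the last |mu| letters. *)
Definition signed_perm_module (lam mu : seq nat) : 'M[F]_nG :=
  cyclic_mx aG
    (gmul (symz (young_sub d (lam ++ nseq (sumn mu) 1%N)))
          (asymz (young_sub d (nseq (sumn lam) 1%N ++ mu)))).

(* Specht module S^lam inside M^lam: spanned by the polytabloids, i.e. the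
   cyclic submodule generated by e_t = (row symmetriser)(column antisymmetriser)
   for the row-reading tableau t of shape lam. *)
Definition specht_module (lam : seq nat) : 'M[F]_nG :=
  cyclic_mx aG (gmul (symz (young_sub d lam)) (asymz (col_stab d lam))).

Definition mx_indecomposable (U : 'M[F]_nG) : Prop :=
  [/\ mxmodule aG U, U != 0 &
   forall V W : 'M[F]_nG, mxmodule aG V -> mxmodule aG W ->
     (V + W :=: U)%MS -> mxdirect (V + W) -> V = 0 \/ W = 0].

(* Y is (a submodule realising) the Young module Y^lam: an indecomposable
   direct summand of M^lam containing S^lam. *)
Definition is_young_module (lam : seq nat) (Y : 'M[F]_nG) : Prop :=
  [/\ mx_indecomposable Y, inhabited (mxsplits aG (perm_module lam) Y) &
      (specht_module lam <= Y)%MS].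

End GroupAlgebra.

(* Main.v *)
Require Import Defs.
From HB Require Import structures.
From mathcomp Require Import all_boot all_order all_algebra all_fingroup.
From mathcomp Require Import mxrepresentation.
Set Implicit Arguments. Unset Strict Implicit. Unset Printing Implicit Defensive.
Import GRing.Theory.
Local Open Scope ring_scope.

Lemma stab_nat (f : nat -> nat) : (forall k, f k.+1 <= f k)%N -> exists k, f k.+1 = f k.
Proof.
move=> dec; move: {2}(f 0%N) (leqnn (f 0%N)) => m; elim: m f dec => [|m IH] f dec le.
  by exists 0%N; apply/eqP; rewrite eqn_leq dec (leq_trans le).
case: (ltngtP (f 1%N) (f 0%N)) => [lt|gt|eq]; last by exists 0%N.
  have le1 : (f 1%N <= m)%N by rewrite -ltnS (leq_trans lt le).
  have [k Hk] := IH (fun k => f k.+1) (fun k => dec k.+1) le1.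
  by exists k.+1.
by move: (dec 0%N); rewrite leqNgt gt.
Qed.

Section Fitting.
Variables (F : fieldType) (gT : finGroupType) (G : {group gT}) (n : nat).
Variable rG : mx_representation F G n.

Fixpoint mpow (g : 'M[F]_n) k := if k is k'.+1 then mpow g k' *m g else 1%:M.

Lemma mpowSl g k : mpow g k.+1 = g *m mpow g k.
Proof.
elim: k => [|k IH]; first by rewrite /= mul1mx mulmx1.
by move: IH; rewrite /= => IH; rewrite IH -mulmxA IH.
Qed.

Lemma mpowD g i j : mpow g (i + j) = mpow g i *m mpow g j.
Proof.
elim: j => [|j IH]; first by rewrite addn0 mulmx1.
by rewrite addnS /= IH mulmxA.
Qed.

Lemma fitting (Y S g : 'M[F]_n) :
  mxmodule rG Y ->
  (forall V W : 'M_n, mxmodule rG V -> mxmodule rG W -> (V + W :=: Y)%MS ->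
     mxdirect (V + W) -> V = 0 \/ W = 0) ->
  (Y <= dom_hom_mx rG g)%MS -> (Y *m g <= Y)%MS -> (S <= Y)%MS -> S != 0 ->
  S *m g = S ->
  (Y :&: kermx g)%MS = 0.
Proof.
move=> modY indec homg hYg sSY nzS Sg.
have YgkY k : (Y *m mpow g k <= Y)%MS.
  elim: k => [|k IH] /=; first by rewrite mulmx1.
  by rewrite mulmxA; apply: submx_trans hYg; apply: submxMr.
have Ydec k : (Y *m mpow g k.+1 <= Y *m mpow g k)%MS.
  by rewrite mpowSl mulmxA submxMr.
have hom k : (Y <= dom_hom_mx rG (mpow g k))%MS.
  elim: k => [|k IH]; first by rewrite /= scalar_mx_hom.
  apply/hom_mxP => x Gx /=.
  have h1 := hom_mxP IH x Gx.
  have h2 := hom_mxP (submx_trans (YgkY k) homg) x Gx.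
  by rewrite !mulmxA h1 h2.
have [k Hk] := stab_nat (fun k => mxrankS (Ydec k)).
have eqI j : (Y *m mpow g (j + k) :=: Y *m mpow g k)%MS.
  elim: j => [|j IH] //.
  rewrite addSn /= mulmxA.
  apply: eqmx_trans (eqmxMr g IH) _.
  rewrite -mulmxA -[mpow g k *m g]/(mpow g k.+1).
  apply/eqmxP; rewrite Ydec /=.
  by have := mxrank_leqif_sup (Ydec k); rewrite Hk => -[_ <-].
pose N := k.+1.
pose I := (Y *m mpow g N)%MS.
have eqIk : (I :=: Y *m mpow g k)%MS by exact: (eqI 1%N).
have IgI : (I *m mpow g N :=: I)%MS.
  rewrite /I -mulmxA -mpowD.
  apply: eqmx_trans _ (eqmx_sym eqIk).
  by rewrite /N addnS -addSn; apply: eqI.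
have injI : (I :&: kermx (mpow g N))%MS = 0.
  apply/eqP; apply/mxrank_injP.
  by rewrite IgI.
pose K := (Y :&: kermx (mpow g N))%MS.
have modK : mxmodule rG K by exact: (kermx_hom_module (hom N) modY).
have modI : mxmodule rG I by exact: (hom_mxmodule (hom N) modY).
have IY : (I <= Y)%MS by apply: YgkY.
have sumKI : (K + I :=: Y)%MS.
  apply/eqmxP; rewrite addsmx_sub capmxSl IY /=.
  apply/row_subP => i; set v := row i Y.
  have vY : (v <= Y)%MS by apply: row_sub.
  have : (v *m mpow g N <= I *m mpow g N)%MS by rewrite IgI submxMr.
  case/submxP => w Hw.
  set u := w *m I.
  rewrite -(subrK u v); apply: addmx_sub_adds; last by rewrite /u submxMl.
  rewrite sub_capmx; apply/andP; split.
    by rewrite addmx_sub // ?eqmx_opp (submx_trans _ IY) // /u submxMl.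
  by apply/sub_kermxP; rewrite mulmxDl Hw mulNmx /u mulmxA subrr.
have dKI : mxdirect (K + I).
  apply/mxdirect_addsP.
  have X1 : ((K :&: I) <= I *m mpow g N)%MS by rewrite IgI capmxSr.
  case/submxP: X1 => D HD.
  have X2 : ((K :&: I)%MS *m mpow g N = 0).
    by apply/sub_kermxP; apply: submx_trans (capmxSl _ _) _; apply: capmxSr.
  rewrite HD mulmxA; apply/eqP; rewrite -submx0 -injI sub_capmx.
  rewrite -{1}IgI submxMr ?submxMl //=.
  by apply/sub_kermxP; rewrite -[mpow g k *m g]/(mpow g N) -(mulmxA D) -HD.
have SgN j : S *m mpow g j = S.
  by elim: j => [|j IH] /=; rewrite ?mulmx1 // mulmxA IH Sg.
case: (indec K I modK modI sumKI dKI) => [K0|I0].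
  apply/eqP; rewrite -submx0 -K0 sub_capmx capmxSl /=.
  apply/sub_kermxP; rewrite -[mpow g k *m g]/(mpow g k.+1) mpowSl mulmxA.
  by rewrite (sub_kermxP (capmxSr _ _)) mul0mx.
case/negP: nzS; rewrite -submx0 -I0 -(SgN N) /I submxMr //.
Qed.

End Fitting.
Section Assemble.
Variables (F : fieldType) (gT : finGroupType) (G : {group gT}) (n : nat).
Variable rG : mx_representation F G n.

Lemma assemble (M Msgn Y W E S : 'M[F]_n) :
  mxmodule rG Y -> mxmodule rG W -> mxmodule rG Msgn ->
  (forall V W : 'M_n, mxmodule rG V -> mxmodule rG W -> (V + W :=: Y)%MS ->
     mxdirect (V + W) -> V = 0 \/ W = 0) ->
  (Y + W :=: M)%MS -> mxdirect (Y + W) ->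
  centgmx rG E -> (M *m E <= Msgn)%MS -> (Msgn <= M)%MS ->
  (S <= Y)%MS -> S != 0 -> S *m E = S ->
  exists Z : 'M_n, [/\ mxmodule rG Z, inhabited (mxsplits rG Msgn Z) & mx_iso rG Y Z].
Proof.
move=> modY modW modMs indec sumYW dYW cE MEs MsM sSY nzS SE.
have dYW0 : (Y :&: W)%MS = 0 by apply/mxdirect_addsP.
have homE m (U : 'M_(m, n)) : (U <= dom_hom_mx rG E)%MS by apply: centgmx_hom.
have YM : (Y <= M)%MS by rewrite -sumYW addsmxSl.
have WM : (W <= M)%MS by rewrite -sumYW addsmxSr.
pose P := proj_mx Y W.
have homP : (Y + W <= dom_hom_mx rG P)%MS by apply: proj_mx_hom.
have Psub m (A : 'M_(m, n)) : (A *m P <= Y)%MS by apply: proj_mx_sub.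
have Pid m (A : 'M_(m, n)) : (A <= Y)%MS -> A *m P = A by apply: proj_mx_id.
have P0 m (A : 'M_(m, n)) : (A <= W)%MS -> A *m P = 0 by apply: proj_mx_0.
clearbody P.
pose g := E *m P.
have YEM : (Y *m E <= M)%MS by apply: submx_trans MsM; apply: submx_trans MEs; apply: submxMr.
have homg : (Y <= dom_hom_mx rG g)%MS.
  apply/hom_mxP => x Gx.
  rewrite /g !mulmxA (hom_mxP (homE _ Y) x Gx).
  have YEYW : (Y *m E <= Y + W)%MS by rewrite sumYW.
  by rewrite (hom_mxP (submx_trans YEYW homP) x Gx).
have Ygs : (Y *m g <= Y)%MS by rewrite /g mulmxA Psub.
have Sg : S *m g = S by rewrite /g mulmxA SE Pid.
have Yker := fitting modY indec homg Ygs sSY nzS Sg.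
have rYg : \rank (Y *m g) = \rank Y by apply/mxrank_injP; rewrite Yker.
have rYE : \rank (Y *m E) = \rank Y.
  apply/eqP; rewrite eqn_leq mxrankM_maxl /= -{1}rYg /g mulmxA mxrankM_maxl //.
pose Z := (Y *m E)%MS.
have ZW0 : (Z :&: W)%MS = 0.
  have : ((Z :&: W)%MS <= Z)%MS by apply: capmxSl.
  case/submxP => D HD.
  have XP : (Z :&: W)%MS *m P = 0 by apply: P0; apply: capmxSr.
  have y0 : D *m Y = 0.
    apply/eqP; rewrite -submx0 -Yker sub_capmx submxMl /=.
    by apply/sub_kermxP; rewrite /g mulmxA -(mulmxA D) -/Z -HD.
  by rewrite HD /Z mulmxA y0 mul0mx.
have ZM : (Z <= M)%MS by exact: YEM.
have ZWM : (Z + W :=: M)%MS.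
  apply/eqmxP; rewrite addsmx_sub ZM WM /=.
  have sZWM : (Z + W <= M)%MS by rewrite addsmx_sub ZM WM.
  have := mxrank_leqif_sup sZWM.
  rewrite mxrank_disjoint_sum // rYE -mxrank_disjoint_sum // sumYW.
  by case=> _ <-.
have ZMs : (Z <= Msgn)%MS by apply: submx_trans MEs; apply: submxMr.
exists Z; split.
- exact: (hom_mxmodule (homE _ Y) modY).
- constructor; apply: (MxSplits (W := (Msgn :&: W)%MS)).
  + exact: capmx_module.
  + apply/eqmxP; rewrite addsmx_sub ZMs capmxSl /=.
    rewrite capmxC matrix_modl // sub_capmx submx_refl andbT ZWM //.
  + apply/mxdirect_addsP; apply/eqP; rewrite -submx0 -ZW0.
    by apply: capmxS => //; apply: capmxSr.
- have [f unitf Hf] := complete_unitmx rYE.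
  have eqZ : (Y *m f :=: Z)%MS by rewrite -Hf; apply: eqmx_refl.
  have homf : (Y <= dom_hom_mx rG f)%MS.
    apply/hom_mxP => x Gx; have [ux defUx] := submxP (mxmoduleP modY x Gx).
    by rewrite -Hf -(hom_mxP (homE _ Y) x Gx) defUx -!(mulmxA ux) Hf.
  exact: (MxIso unitf homf eqZ).
Qed.

End Assemble.
Section GA.
Variables (F : fieldType) (d : nat).
Local Notation n := (nG d).
Local Notation aGd := (aG F d).
Local Notation gelt := (@gelt F d).

Lemma inG (x : {perm 'I_d}) : x \in SymG d.
Proof. by rewrite inE. Qed.

Lemma gring_mx_gelt x : gring_mx aGd (gelt x) = aGd x.
Proof. by rewrite -(gring_opG aGd (inG x)) gring_opE. Qed.

Lemma gmul_gelt (u : 'rV[F]_n) x : gmul u (gelt x) = u *m aGd x.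
Proof. by rewrite /gmul gring_mx_gelt. Qed.

Lemma gelt_mul x y : gelt x *m aGd y = gelt (x * y).
Proof. by rewrite /gelt /Defs.gelt -gring_row_mul repr_mxM ?inG. Qed.

Lemma gmul_gelt2 x y : gmul (gelt x) (gelt y) = gelt (x * y).
Proof. by rewrite gmul_gelt gelt_mul. Qed.

Lemma gmulA (u v w : 'rV[F]_n) : gmul (gmul u v) w = gmul u (gmul v w).
Proof. by rewrite /gmul gring_mxA mulmxA. Qed.

Lemma gmulZl a (u v : 'rV[F]_n) : gmul (a *: u) v = a *: gmul u v.
Proof. by rewrite /gmul scalemxAl. Qed.

Lemma gmulZr a (u v : 'rV[F]_n) : gmul u (a *: v) = a *: gmul u v.
Proof. by rewrite /gmul linearZ /= scalemxAr. Qed.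

Lemma gmul_suml I r (P : pred I) (f : I -> 'rV[F]_n) v :
  gmul (\sum_(i <- r | P i) f i) v = \sum_(i <- r | P i) gmul (f i) v.
Proof. by rewrite /gmul mulmx_suml. Qed.

Lemma gmul_sumr I r (P : pred I) (f : I -> 'rV[F]_n) u :
  gmul u (\sum_(i <- r | P i) f i) = \sum_(i <- r | P i) gmul u (f i).
Proof. by rewrite /gmul linear_sum /= mulmx_sumr. Qed.

Definition Lmx (e : 'rV[F]_n) : 'M[F]_n := \matrix_(i < n) gmul e (delta_mx 0 i).

Lemma Lmx_mul (u e : 'rV[F]_n) : u *m Lmx e = gmul e u.
Proof.
rewrite mulmx_sum_row {2}[u]row_sum_delta gmul_sumr.
by apply: eq_bigr => i _; rewrite rowK gmulZr.
Qed.

Lemma Lmx_cent e : centgmx aGd (Lmx e).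
Proof.
apply/centgmxP => x Gx; apply/row_matrixP => i.
by rewrite !row_mul rowK Lmx_mul rowE -!gmul_gelt gmulA.
Qed.

Definition sgn (x : {perm 'I_d}) : F := (-1) ^+ odd_perm x.

Lemma sgnM x y : sgn (x * y)%g = sgn x * sgn y.
Proof. by rewrite /sgn odd_permM signr_addb. Qed.

Lemma sym_asymC (R H : {set {perm 'I_d}}) :
  (forall r h, r \in R -> h \in H -> commute r h) ->
  gmul (symz F R) (asymz F H) = gmul (asymz F H) (symz F R).
Proof.
move=> cRH; rewrite /symz /asymz gmul_suml gmul_suml.
under eq_bigr => r _ do rewrite gmul_sumr.
under [RHS]eq_bigr => h _ do rewrite gmul_sumr.
rewrite exchange_big /=; apply: eq_bigr => h Hh; apply: eq_bigr => r Rr.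
by rewrite gmulZl gmulZr !gmul_gelt2 cRH.
Qed.

Lemma asym_asym (H C : {set {perm 'I_d}}) :
  H \subset C -> (forall x y, x \in C -> y \in C -> (x * y)%g \in C) ->
  (forall x, x \in C -> (x^-1)%g \in C) ->
  gmul (asymz F H) (asymz F C) = #|H|%:R *: asymz F C.
Proof.
move=> sHC mulC invC; rewrite /asymz gmul_suml.
rewrite scaler_nat -sumr_const; apply: eq_bigr => h Hh.
have Ch : h \in C by apply: (subsetP sHC).
rewrite gmulZl gmul_sumr.
rewrite [RHS](reindex_inj (mulgI h)) /=.
rewrite [RHS](eq_bigl (fun x => x \in C)); last first.
  move=> x; apply/idP/idP => [hx|]; last by apply: mulC.
  by rewrite -(mulKg h x); apply: mulC => //; apply: invC.
rewrite scaler_sumr; apply: eq_bigr => x Cx.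
by rewrite gmulZr gmul_gelt2 scalerA -[(-1) ^+ (h * x)%g]/(sgn (h * x)%g) sgnM.
Qed.

End GA.
Definition Pf (gamma : seq nat) r := (\sum_(l < r) nth 0 gamma l)%N.

Lemma Pf_step g k : (Pf g k <= Pf g k.+1)%N.
Proof. by rewrite /Pf big_ord_recr /= leq_addr. Qed.

Lemma Pf_mono g : {homo Pf g : m k / (m <= k)%N}.
Proof. apply: homo_leq => //; [exact: leq_trans | exact: Pf_step]. Qed.

Lemma rowof_eq gamma i r : (r < size gamma)%N -> (Pf gamma r <= i < Pf gamma r.+1)%N ->
  rowof gamma i = r.
Proof.
move=> rs /andP[lo hi]; rewrite /rowof.
have -> : size gamma = (r + (size gamma - r))%N by rewrite subnKC // ltnW.
rewrite iotaD count_cat add0n.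
rewrite (@eq_in_count _ _ predT); last first.
  move=> j; rewrite mem_iota add0n => /andP[_ jr] /=.
  exact: leq_trans (@Pf_mono gamma _ _ jr) lo.
rewrite count_predT size_iota.
rewrite (@eq_in_count _ _ pred0); last first.
  move=> j; rewrite mem_iota => /andP[rj _] /=.
  apply/negbTE; rewrite -ltnNge; apply: leq_trans hi (@Pf_mono gamma _ _ _).
  by rewrite ltnS.
by rewrite count_pred0 addn0.
Qed.

Lemma Pf0 g : Pf g 0 = 0%N.
Proof. by rewrite /Pf big_ord0. Qed.

Lemma Pf_cons x g k : Pf (x :: g) k.+1 = (x + Pf g k)%N.
Proof. by rewrite /Pf big_ord_recl. Qed.

Lemma Pf_nseq n t m : (m <= n)%N -> Pf (nseq n 1%N ++ t) m = m.
Proof.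
elim: n m => [|n IH] [|m] //= le; rewrite ?Pf0 //.
by rewrite Pf_cons IH.
Qed.

Lemma Pf_nseq_last n t : Pf (nseq n 1%N ++ t) n.+1 = (n + nth 0 t 0)%N.
Proof.
elim: n => [|n IH] /=; first by rewrite /Pf big_ord1.
by rewrite Pf_cons IH addSn.
Qed.

Section Combi.
Variables a b c : nat.
Local Notation d := (a + b + c)%N.
Local Notation lam := [:: a, b & nseq c 1%N].
Local Notation gam := (nseq (a + b) 1%N ++ [:: c]).

Lemma Pf_lam m : (m <= c)%N -> Pf lam m.+2 = (a + b + m)%N.
Proof.
move=> le; rewrite !Pf_cons.
have := Pf_nseq [::] le; rewrite cats0 => ->.
by rewrite addnA.
Qed.

Lemma rowof_lam i : (i < d)%N ->
  rowof lam i = if (i < a)%N then 0%N else if (i < a + b)%N then 1%N else (i - (a + b)).+2.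
Proof.
move=> id; case: ifP => ia.
  by apply: rowof_eq => //; rewrite Pf0 Pf_cons Pf0 addn0 ia.
case: ifP => iab.
  apply: rowof_eq => //; rewrite Pf_cons Pf0 addn0 Pf_cons Pf_cons Pf0 addn0 iab.
  by rewrite leqNgt ia.
have m_lt : (i - (a + b) < c)%N.
  by rewrite ltn_subLR ?(leqNgt (a+b)) ?iab // -addnA.
apply: rowof_eq; first by rewrite /= size_nseq !ltnS.
rewrite Pf_lam ?(ltnW m_lt) // Pf_lam //.
rewrite subnKC ?leqnn /= ?addnS ?subnKC ?ltnSn //; by rewrite leqNgt iab.
Qed.

Lemma colof_lam i : (i < d)%N ->
  colof lam i = if (i < a)%N then i else if (i < a + b)%N then (i - a)%N else 0%N.
Proof.
move=> id; rewrite /colof rowof_lam //.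
case: ifP => ia; first by rewrite -/(Pf lam 0) Pf0 subn0.
case: ifP => iab; first by rewrite -/(Pf lam 1) Pf_cons Pf0 addn0.
have m_lt : (i - (a + b) < c)%N.
  by rewrite ltn_subLR ?(leqNgt (a+b)) ?iab // -addnA.
rewrite -/(Pf lam (i - (a + b)).+2) Pf_lam ?(ltnW m_lt) //.
by rewrite subnKC ?subnn // leqNgt iab.
Qed.

Lemma rowof_gam i : (i < d)%N ->
  rowof gam i = if (i < a + b)%N then i else (a + b)%N.
Proof.
move=> id; case: ifP => iab.
  apply: rowof_eq; first by rewrite size_cat size_nseq addn1 ltnS ltnW.
  by rewrite (Pf_nseq _ (ltnW iab)) (Pf_nseq _ iab) leqnn ltnSn.
apply: rowof_eq; first by rewrite size_cat size_nseq addn1.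
by rewrite Pf_nseq // Pf_nseq_last /= leqNgt iab.
Qed.

End Combi.
From mathcomp Require Import zify.

Section GA2.
Variables (F : fieldType) (d : nat).
Local Notation gelt := (@gelt F d).

Lemma gelt_delta x : gelt x = delta_mx 0 (gring_index (SymG d) x).
Proof.
rewrite /Defs.gelt /gring_row /=.
by rewrite rowK gring_indexK ?group1 // mul1g.
Qed.

Lemma coef_gelt x : (gelt x) 0 (gring_index (SymG d) 1%g) = (x == 1%g)%:R.
Proof.
rewrite gelt_delta mxE eqxx /=; congr (_ %:R).
by rewrite eq_sym (can_in_eq (@gring_indexK _ (SymG d))) ?inE.
Qed.

Lemma sym_asym_neq0 (R C : {set {perm 'I_d}}) :
  1%g \in R -> 1%g \in C -> (forall x, x \in R -> x \in C -> x = 1%g) ->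
  (forall x, x \in C -> (x^-1)%g \in C) ->
  gmul (symz F R) (asymz F C) != 0.
Proof.
move=> R1 C1 RC invC.
set idx := gring_index (SymG d) 1%g.
have coef : (gmul (symz F R) (asymz F C)) 0 idx = 1.
  rewrite /symz gmul_suml summxE (bigD1 1%g) //= big1 ?addr0.
    rewrite /asymz gmul_sumr summxE (bigD1 1%g) //= big1 ?addr0.
      by rewrite gmulZr gmul_gelt2 mulg1 mxE coef_gelt eqxx /sgn odd_perm1 mulr1.
    move=> x /andP[Cx x1]; rewrite gmulZr gmul_gelt2 mul1g mxE coef_gelt.
    by rewrite (negbTE x1) mulr0.
  move=> r /andP[Rr r1]; rewrite /asymz gmul_sumr summxE big1 // => x Cx.
  rewrite gmulZr gmul_gelt2 mxE coef_gelt.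
  case: eqP => [rx1|]; last by rewrite mulr0.
  have xr : x = (r^-1)%g by rewrite -(mulKg r x) rx1 mulg1.
  have Cr : r \in C by rewrite -(invgK r) -xr invC.
  by case/eqP: r1; apply: RC.
apply/eqP => h0; move: coef; rewrite h0 mxE => /eqP.
by rewrite eq_sym oner_eq0.
Qed.

End GA2.

Section Perms.
Variables a b c : nat.
Local Notation d := (a + b + c)%N.
Local Notation lam := [:: a, b & nseq c 1%N].
Local Notation gam := (nseq (a + b) 1%N ++ [:: c]).
Local Notation R := (young_sub d lam).
Local Notation H := (young_sub d gam).
Local Notation C := (col_stab d lam).

Lemma stabP (f : nat -> nat) (s : {perm 'I_d}) :
  reflect (forall i, f (s i) = f i) (s \in stab_lab d f).
Proof. by rewrite inE; apply: (iffP forallP) => h i; apply/eqP/h. Qed.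

Lemma stab1 f : 1%g \in stab_lab d f.
Proof. by apply/stabP => i; rewrite perm1. Qed.

Lemma stabM f s t : s \in stab_lab d f -> t \in stab_lab d f -> (s * t)%g \in stab_lab d f.
Proof. by move=> /stabP hs /stabP ht; apply/stabP => i; rewrite permM ht hs. Qed.

Lemma stabV f s : s \in stab_lab d f -> (s^-1)%g \in stab_lab d f.
Proof. by move=> /stabP hs; apply/stabP => i; rewrite -{2}(permKV s i) hs. Qed.

Lemma R_fix r (i : 'I_d) : r \in R -> (a + b <= i)%N -> r i = i.
Proof.
move=> /stabP /(_ i) hr le; apply/val_inj => /=.
move: hr; rewrite !rowof_lam ?ltn_ord //.
move: le; case: (ltnP (r i) a); case: (ltnP (r i) (a + b)); case: (ltnP i a);
  case: (ltnP i (a + b)); move=> *; lia.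
Qed.

Lemma H_fix h (i : 'I_d) : h \in H -> (i < a + b)%N -> h i = i.
Proof.
move=> /stabP /(_ i) hr le; apply/val_inj => /=.
move: hr; rewrite !rowof_gam ?ltn_ord //.
move: le; case: (ltnP (h i) (a + b)); case: (ltnP i (a + b)); move=> *; lia.
Qed.

Lemma H_out h (i : 'I_d) : h \in H -> (a + b <= i)%N -> (a + b <= h i)%N.
Proof.
move=> Hh le; rewrite leqNgt; apply/negP => lt.
have := H_fix Hh lt; move/perm_inj => e; move: lt; rewrite e; lia.
Qed.

Lemma R_in r (i : 'I_d) : r \in R -> (i < a + b)%N -> (r i < a + b)%N.
Proof.
move=> Rr lt; rewrite ltnNge; apply/negP => le.
have := R_fix Rr le; move/perm_inj => e; move: le; rewrite e; lia.
Qed.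

Lemma RH_commute r h : r \in R -> h \in H -> commute r h.
Proof.
move=> Rr Hh; rewrite /commute; apply/permP => i; rewrite !permM.
case: (ltnP i (a + b)) => le.
  by rewrite (H_fix Hh le) (H_fix Hh (R_in Rr le)).
by rewrite (R_fix Rr le) (R_fix Rr (H_out Hh le)).
Qed.

Lemma H_sub_C : H \subset C.
Proof.
apply/subsetP => h Hh; apply/stabP => i.
case: (ltnP i (a + b)) => le; first by rewrite (H_fix Hh le).
have le' := H_out Hh le.
rewrite !colof_lam ?ltn_ord //.
move: le le'; case: (ltnP (h i) a); case: (ltnP (h i) (a + b)); case: (ltnP i a);
  case: (ltnP i (a + b)); move=> *; lia.
Qed.

Lemma RC_triv r : r \in R -> r \in C -> r = 1%g.
Proof.
move=> /stabP Rr /stabP Cr; apply/permP => i; rewrite perm1; apply/val_inj => /=.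
have := Rr i; have := Cr i.
rewrite !rowof_lam ?colof_lam ?ltn_ord //.
case: (ltnP (r i) a); case: (ltnP (r i) (a + b)); case: (ltnP i a);
  case: (ltnP i (a + b)); move=> *; lia.
Qed.

Lemma card_H : #|H| = c`!.
Proof.
pose B := [set i : 'I_d | (a + b <= i)%N].
have -> : #|H| = #|perm_on B|.
  apply: eq_card => s; apply/idP/idP => [Hs|ps].
    apply/subsetP => x; rewrite !inE; apply: contraR; rewrite -ltnNge => lt.
    by rewrite (H_fix Hs lt).
  apply/stabP => i; rewrite !rowof_gam ?ltn_ord //.
  case: (ltnP i (a + b)) => le.
    have si : s i = i by rewrite (out_perm ps) // /B inE -ltnNge.
    by rewrite si le.
  have le' : (a + b <= s i)%N.
    rewrite leqNgt; apply/negP => lt.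
    have e : s (s i) = s i by rewrite (out_perm ps) // /B inE -ltnNge.
    by move/perm_inj: e => e; move: lt; rewrite e ltnNge le.
  by rewrite ltnNge le'.
rewrite card_perm; congr (_ `!).
have -> : B = [set rshift (a + b) j | j : 'I_c].
  apply/setP => i; rewrite inE; apply/idP/imsetP => [le|[j _ ->]]; last by rewrite /= leq_addr.
  have lt : (i - (a + b) < c)%N by have := ltn_ord i; lia.
  by exists (Ordinal lt) => //; apply/val_inj => /=; lia.
by rewrite card_imset ?card_ord //; apply: rshift_inj.
Qed.

End Perms.

Lemma fact_neq0 (F : fieldType) p c : p \in [pchar F] -> (c < p)%N -> (c`!)%:R != 0 :> F.
Proof.
move=> pch; elim: c => [|c IH] lt; first by rewrite oner_eq0.
rewrite factS natrM mulf_neq0 ?IH ?(ltnW lt) //.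
rewrite -(dvdn_pcharf pch); apply/negP => /dvdn_leq.
by move=> /(_ isT); rewrite leqNgt lt.
Qed.

Lemma gmul_cyclic (F : fieldType) d (u v : 'rV[F]_(nG d)) :
  (gmul u v <= cyclic_mx (aG F d) u)%MS.
Proof. by apply/cyclic_mxP; exists (gring_mx (aG F d) v) => //; apply: gring_mxP. Qed.

Unset Implicit Arguments.

Theorem proposition3p5p1 (F : fieldType) (p : nat) (a b c : nat)
  (Y : 'M[F]_(nG ((a + b + c)%N))) :
  prime p -> p \in [pchar F] ->
  (1 <= c < p)%N -> (1 <= b <= a)%N ->
  @is_young_module F (a + b + c)%N [:: a, b & nseq c 1%N] Y ->
  exists Z : 'M[F]_(nG ((a + b + c)%N)),
    [/\ mxmodule (aG F ((a + b + c)%N)) Z,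
        inhabited (mxsplits (aG F ((a + b + c)%N))
                     (signed_perm_module F ((a + b + c)%N) [:: a; b] [:: c]) Z) &
        mx_iso (aG F ((a + b + c)%N)) Y Z].
Proof.
move=> pr pch /andP[c1 cp] /andP[b1 ba] [[modY nzY indec] [spl] SY].
case: spl => W modW sumYW dYW.
set xs := symz F (young_sub (a + b + c) [:: a, b & nseq c 1%N]).
set asH := asymz F (young_sub (a + b + c) (nseq (a + b) 1%N ++ [:: c])).
set A := asymz F (col_stab (a + b + c) [:: a, b & nseq c 1%N]).
have kF : (#|young_sub (a + b + c) (nseq (a + b) 1%N ++ [:: c])|%:R : F) != 0.
  by rewrite card_H (fact_neq0 pch cp).
set k := #|young_sub (a + b + c) (nseq (a + b) 1%N ++ [:: c])| in kF.
set E := Lmx (k%:R^-1 *: asH).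
have cE : centgmx (aG F (a + b + c)) E by apply: Lmx_cent.
have eqS : signed_perm_module F (a + b + c) [:: a; b] [:: c] =
           cyclic_mx (aG F (a + b + c)) (gmul xs asH).
  have e1 : [:: a; b] ++ nseq (sumn [:: c]) 1%N = [:: a, b & nseq c 1%N].
    by rewrite [sumn _]/= addn0.
  have e2 : sumn [:: a; b] = (a + b)%N by rewrite [sumn _]/= addn0.
  by rewrite /signed_perm_module e1 e2.
rewrite eqS.
have cRH := @RH_commute a b c.
apply: (@assemble F _ (SymG (a + b + c)) _ (aG F (a + b + c))
          (perm_module F (a + b + c) [:: a, b & nseq c 1%N])
          (cyclic_mx (aG F (a + b + c)) (gmul xs asH)) Y W E
          (specht_module F (a + b + c) [:: a, b & nseq c 1%N]) modY modW).
- exact: cyclic_mx_module.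
- exact: indec.
- exact: sumYW.
- exact: dYW.
- exact: cE.
- rewrite /perm_module -/xs.
  have h : (cyclic_mx (aG F (a+b+c)) xs *m E :=: cyclic_mx (aG F (a+b+c)) (xs *m E))%MS.
    by apply: hom_cyclic_mx; apply: centgmx_hom.
  rewrite h.
  apply: cyclic_mx_sub; first exact: cyclic_mx_module.
  rewrite Lmx_mul gmulZl -sym_asymC //.
  by apply: scalemx_sub; apply: cyclic_mx_id.
- by apply: cyclic_mx_sub; [exact: cyclic_mx_module | exact: gmul_cyclic].
- exact: SY.
- rewrite /specht_module cyclic_mx_eq0; apply: sym_asym_neq0.
  + exact: stab1.
  + exact: stab1.
  + exact: RC_triv.
  + by move=> x; apply: stabV.
- have wE : gmul xs A *m E = gmul xs A.
    rewrite Lmx_mul gmulZl -gmulA -sym_asymC // gmulA asym_asym.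
    + by rewrite gmulZr scalerA mulVf // scale1r.
    + exact: H_sub_C.
    + by move=> x y; apply: stabM.
    + by move=> x; apply: stabV.
  have cE1 : centgmx (aG F (a + b + c)) (E - 1%:M).
    apply/centgmxP => x Gx.
    by rewrite mulmxBl mulmxBr mul1mx mulmx1 (centgmxP cE x Gx).
  have sub : (specht_module F (a + b + c) [:: a, b & nseq c 1%N] <=
              1%:M :&: kermx (E - 1%:M))%MS.
    apply: cyclic_mx_sub.
      by apply: kermx_hom_module; [apply: centgmx_hom | apply: mxmodule1].
    rewrite sub_capmx submx1 /=; apply/sub_kermxP.
    by rewrite mulmxBr mulmx1 wE subrr.
  have := sub_kermxP (submx_trans sub (capmxSr _ _)).
  by rewrite mulmxBr mulmx1 => /eqP; rewrite subr_eq0 => /eqP.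
Qed.
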